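(* The transformation $\mathcal{A}_2$ is an Upsilon transformation with dilation measure $\tau(\mathrm{d}u)=a_1(u;1)\mathrm{d}u$; that is, for $\nu\in\mathfrak{M}_L^2(\mathbb{R}^d)$, $\widetilde\nu=\mathcal{A}_2(\nu)$ satisfies $\widetilde\nu(B)=\mathrm{E}[\nu(A^{-1}B)]$ for all Borel $B\subset\mathbb{R}^d$, where $A$ is a random variable with density $a_1(u;1)$.
   Context: A Lévy measure on $\mathbb{R}^d$ is a measure $\nu$ with $\nu(\{0\})=0$ and $\int(1\wedge|x|^2)\nu(\mathrm{d}x)<\infty$; their class is $\mathfrak{M}_L^2(\mathbb{R}^d)$. For $s>0$ set $a_1(r;s)=2\pi^{-1}(s-r^2)^{-1/2}$ for $0<r<s^{1/2}$ and $0$ otherwise; $a_2(r;s)=2\pi^{-1}(s^2-r^2)^{-1/2}$ for $0<r<s$ and $0$ otherwise. $\mathcal{A}_2(\nu)(B)=\int_{\mathbb{R}^d\setminus\{0\}}\nu(\mathrm{d}x)\int_0^\infty a_2(r;|x|)1_B(rx/|x|)\,\mathrm{d}r$. For a measure $\tau$ on $(0,\infty)$, the Upsilon transformation with dilation measure $\tau$ is $\Upsilon_\tau(\nu)(B)=\int_0^\infty\nu(u^{-1}B)\tau(\mathrm{d}u)$, where $u^{-1}B=\{u^{-1}x:x\in B\}$. *)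

(* Defs.v *)
From HB Require Import structures.
From mathcomp Require Import all_boot all_order all_algebra.
From mathcomp Require Import all_classical all_reals all_analysis.
Set Implicit Arguments. Unset Strict Implicit. Unset Printing Implicit Defensive.
Import Order.TTheory GRing.Theory Num.Theory.
Import numFieldNormedType.Exports.
Local Open Scope classical_set_scope.
Local Open Scope ring_scope.

Definition Rd (R : realType) (d : nat) :=
  g_sigma_algebraType (@open 'rV[R]_d).

Definition enorm (R : realType) (d : nat) (x : 'rV[R]_d) : R :=
  Num.sqrt (\sum_(i < d) x ord0 i ^+ 2).

Definition a1 (R : realType) (r s : R) : R :=
  if (0 < r) && (r < Num.sqrt s) then 2 / pi * (Num.sqrt (s - r ^+ 2))^-1 else 0.
Definition a2 (R : realType) (r s : R) : R :=
  if (0 < r) && (r < s) then 2 / pi * (Num.sqrt (s ^+ 2 - r ^+ 2))^-1 else 0.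

Definition levy_measure (R : realType) (d : nat)
    (nu : {measure set (Rd R d) -> \bar R}) : Prop :=
  nu [set (0 : 'rV[R]_d)] = 0%E /\
  (\int[nu]_x (Order.min 1 (enorm x ^+ 2))%:E < +oo)%E.

Definition A2 (R : realType) (d : nat)
    (nu : {measure set (Rd R d) -> \bar R}) (B : set (Rd R d)) : \bar R :=
  (\int[nu]_(x in ~` [set (0 : 'rV[R]_d)%R])
     \int[lebesgue_measure]_(r in `[0%R, +oo[%classic)
        ((a2 r (enorm x))%:E *
         (\1_B (r *: ((enorm x)^-1 *: x) : Rd R d)%R)%:E))%E.

Definition dil_inv (R : realType) (d : nat) (u : R) (B : set (Rd R d))
  : set (Rd R d) := [set (u^-1 *: x : 'rV[R]_d) | x in B].

(* Upsilon transformation with dilation measure tau(du) = g(u) du on (0,oo):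
   Upsilon_tau(nu)(B) = \int_0^oo nu(u^{-1} B) tau(du) *)
Definition Upsilon_dens (R : realType) (d : nat) (g : R -> R)
    (nu : {measure set (Rd R d) -> \bar R}) (B : set (Rd R d)) : \bar R :=
  (\int[lebesgue_measure]_(u in `]0%R, +oo[%classic)
     (nu (dil_inv u B) * (g u)%:E)%E)%E.

(* Main.v *)
Require Import Defs.
From HB Require Import structures.
From mathcomp Require Import all_boot all_order all_algebra.
From mathcomp Require Import all_classical all_reals all_analysis.
From mathcomp Require Import measurable_realfun.
From mathcomp Require Import ring lra.
Import Order.TTheory GRing.Theory Num.Theory.
Import numFieldNormedType.Exports.
Local Open Scope classical_set_scope.
Local Open Scope ring_scope.
Lemma cont_sum (R : realType) (T : topologicalType) (I : Type) (s : seq I)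
  (g : I -> T -> R) : (forall i, continuous (g i)) ->
  continuous (fun x => \sum_(i <- s) g i x).
Proof.
move=> cg; elim: s => [|a s IH].
  under eq_fun do rewrite big_nil; exact: cst_continuous.
under eq_fun do rewrite big_cons.
move=> x; apply: cvgD; [exact: cg|exact: IH].
Qed.

Lemma enorm_continuous (R : realType) (d : nat) : continuous (@enorm R d).
Proof.
move=> x; apply: continuous_comp; last exact: sqrt_continuous.
apply: cont_sum => i y.
apply: (@continuous_comp _ _ _ (fun M : 'rV[R]_d => M ord0 i) (fun r : R => r ^+ 2) y); [exact: coord_continuous|exact: exprn_continuous].
Qed.

Lemma cont_meas (R : realType) (d : nat) (f : 'rV[R]_d -> R) :
  continuous f -> measurable_fun [set: Rd R d] (f : Rd R d -> R).
Proof.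
move=> /continuousP cf.
apply: (measurability _ (RGenOpens.measurableE R)).
move=> _ [_ [a [b ->]] <-]; rewrite setTI.
apply: sub_sigma_algebra; apply: cf; exact: interval_open.
Qed.

Lemma enorm_ge0 (R : realType) (d : nat) (x : 'rV[R]_d) : 0 <= enorm x.
Proof. exact: sqrtr_ge0. Qed.

Lemma enorm_eq0 (R : realType) (d : nat) (x : 'rV[R]_d) : enorm x = 0 -> x = 0.
Proof.
move/eqP; rewrite /enorm sqrtr_eq0 => hle.
have h0 : \sum_(i < d) x ord0 i ^+ 2 = 0.
  by apply/eqP; rewrite eq_le hle sumr_ge0 // => i _; exact: sqr_ge0.
apply/matrixP => i j; rewrite mxE (ord1 i).
have /psumr_eq0P h := h0.
have := h (fun i _ => sqr_ge0 (x ord0 i)) j isT.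
by move/eqP; rewrite sqrf_eq0 => /eqP.
Qed.

Lemma enorm_gt0 (R : realType) (d : nat) (x : 'rV[R]_d) : x != 0 -> 0 < enorm x.
Proof.
move=> x0; rewrite lt_def enorm_ge0 andbT; apply/eqP => /enorm_eq0 h.
by rewrite h eqxx in x0.
Qed.

Lemma levy_sigma_finite (R : realType) (d : nat)
    (nu : {measure set (Rd R d) -> \bar R}) :
  levy_measure nu -> sigma_finite setT nu.
Proof.
move=> [nu0 fin].
have me := @cont_meas R d _ (@enorm_continuous R d).
have m0 : measurable ([set 0] : set (Rd R d)).
  have -> : ([set 0] : set (Rd R d)) = (@enorm R d) @^-1` [set 0].
    apply/seteqP; split => x /=; first by move->; rewrite /enorm big1 ?sqrtr0 // => i _; rewrite mxE expr0n.
    exact: enorm_eq0.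
  by rewrite -[X in measurable X]setTI; apply: me => //; exact: measurable_set1.
pose c (n : nat) : R := (n.+1%:R)^-1.
have c0 n : 0 < c n by rewrite /c invr_gt0.
have c1 n : c n <= 1 by rewrite /c invf_le1 // ler1n.
have mA n : measurable ([set x | c n <= enorm x] : set (Rd R d)).
  have -> : ([set x | c n <= enorm x] : set (Rd R d)) = (@enorm R d) @^-1` `[c n, +oo[.
    by apply/seteqP; split => x /=; rewrite in_itv /= andbT.
  by rewrite -[X in measurable X]setTI; apply: me.
exists (fun n => [set 0] `|` [set x | c n <= enorm x]).
  apply/seteqP; split => // x _.
  case: (eqVneq x 0) => [->|x0]; first by exists 0%N => //; left.
  have ex := @enorm_gt0 R d x x0.
  exists (Num.truncn (enorm x)^-1) => //; right => /=.
  rewrite /c -[X in _ <= X]invrK; apply: ltW.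
  rewrite ltf_pV2 ?posrE ?invr_gt0 //; exact: truncnS_gt.
move=> n; split; first exact: measurableU.
apply: (le_lt_trans (measureU2 _ _ _)) => //.
rewrite [X in (X + _)%E]nu0 add0e.
set A := [set x | c n <= enorm x].
have hkey : ((c n ^+ 2)%:E * nu A <= \int[nu]_x (Order.min 1 (enorm x ^+ 2))%:E)%E.
  rewrite -[X in nu X](setIT A) -integral_indic //; last exact: mA.
  have mi : measurable_fun [set: Rd R d] (fun x => (\1_A x : R)%:E).
    by apply/measurable_EFinP; apply: measurable_indic; exact: mA.
  rewrite -ge0_integralZl_EFin //; last by rewrite exprn_ge0 // ltW.
  apply: ge0_le_integral => //.
  - by move=> x _; rewrite mule_ge0 // lee_fin ?indic_ge0 // exprn_ge0 // ltW.
  - exact: emeasurable_funM.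
  - apply/measurable_EFinP; have h := @measurable_minr _ (Rd R d) R setT (cst 1) (fun x => enorm x ^+ 2) (measurable_cst _) (measurable_funX 2 me); exact: h.
  move=> x _; rewrite indicE -EFinM lee_fin; case: (boolP (x \in A)) => xA; rewrite ?mulr1 ?mulr0.
    rewrite le_min; apply/andP; split.
      by rewrite expr_le1 // ltW.
    move: xA; rewrite inE /A /= => xA.
    by apply: lerXn2r => //; rewrite ?nnegrE ?enorm_ge0 // ltW.
  by rewrite le_min ler01 exprn_ge0 // enorm_ge0.
rewrite lt_neqAle leey andbT; apply/eqP => nuinf; move: hkey; rewrite nuinf.
rewrite mulry gtr0_sg ?exprn_gt0 // mul1e => h.
by have := le_lt_trans h fin; rewrite ltxx.
Qed.
Lemma lebesgue_scale (R : realType) (c : R) (hc : (0 < c)%R) (A : set R) :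
  measurable A ->
  lebesgue_measure A = (c%:E * lebesgue_measure ((fun u : R => c * u)%R @^-1` A))%E.
Proof.
have ms : measurable_fun [set: measurableTypeR R] (fun u : measurableTypeR R => (c * u)%R : measurableTypeR R).
  by apply: continuous_measurable_fun; exact: mulrl_continuous.
pose P := measure_function_pushforward__canonical__measure_function_Measure lebesgue_measure ms.
move=> mA; change (lebesgue_measure A = mscale (NngNum (ltW hc)) P A).
apply: (@lebesgue_measure_unique R (mscale (NngNum (ltW hc)) P : measure _ R)) => //.
move=> _ [[a b] _ <-] /=.
rewrite /mscale /pushforward /=.
rewrite /pushforward (_ : _ @^-1` _ = `](a / c), (b / c)]%classic); last first.
  apply/seteqP; split => x /=; rewrite !in_itv /=.
    by rewrite ltr_pdivrMr // ler_pdivlMr // [(x * c)%R]mulrC.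
  by rewrite ltr_pdivrMr // ler_pdivlMr // [(x * c)%R]mulrC.
rewrite !lebesgue_measure_itv /= !lte_fin ltr_pM2r ?invr_gt0 //.
case: ifPn => // ab; last by rewrite mule0.
by rewrite -EFinD -EFinM mulrBr !mulrA !(mulrC c) -!mulrA divff ?gt_eqF // !mulr1 EFinB.
Qed.

Lemma integral_scale (R : realType) (c : R) (hc : (0 < c)%R) (f : R -> \bar R) :
  measurable_fun [set: R] f -> (forall x, (0 <= f x)%E) ->
  (\int[lebesgue_measure]_x f x =
   c%:E * \int[lebesgue_measure]_u f (c * u)%R)%E.
Proof.
move=> mf f0.
have ms : measurable_fun [set: measurableTypeR R] (fun u : measurableTypeR R => (c * u)%R : measurableTypeR R).
  by apply: continuous_measurable_fun; exact: mulrl_continuous.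
pose P := measure_function_pushforward__canonical__measure_function_Measure lebesgue_measure ms.
rewrite (eq_measure_integral (mscale (NngNum (ltW hc)) P : measure _ R)); last first.
  move=> A mA _; exact: (@lebesgue_scale R c hc A mA).
rewrite ge0_integral_mscale //=.
congr (_ * _)%E.
rewrite ge0_integral_pushforward //.
Qed.
Lemma rat_approx (R : realType) (x r : R) : 0 < r -> exists q : rat, ball x r (ratr q).
Proof.
move=> r0; have : x - r < x + r by rewrite ltrBlDr -addrA ltrDl addr_gt0.
move=> /rat_in_itvoo [q]; rewrite in_itv /= => /andP[h1 h2].
exists q; rewrite -ball_normE /=.
by rewrite ltr_norml; apply/andP; split; lra.
Qed.

Lemma rV_approx (R : realType) (d : nat) (x : 'rV[R]_d) (r : R) : 0 < r ->
  exists y : 'rV[rat]_d, ball x r (map_mx ratr y).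
Proof.
move=> r0.
have : forall j : 'I_d, exists q : rat, ball (x ord0 j) r (ratr q).
  by move=> j; exact: rat_approx.
move=> /fin_all_exists [f hf].
exists (\row_j f j); rewrite /ball /=; split => // i j.
by rewrite !mxE (ord1 i).
Qed.

Lemma open_prod_meas (R : realType) (d : nat) (O : set (R * 'rV[R]_d)) :
  open O -> measurable (O : set (R * Rd R d)).
Proof.
move=> oO.
pose box (t : rat * 'rV[rat]_d * rat) : set (R * Rd R d) :=
  ball (ratr t.1.1 : R) (ratr t.2) `*` ball (map_mx ratr t.1.2 : 'rV[R]_d) (ratr t.2).
pose F t := if `[< box t `<=` O >] then box t else set0.
have -> : O = \bigcup_t F t.
  apply/seteqP; split; last first.
    by move=> p [t _]; rewrite /F; case: asboolP => // h; exact: h.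
  move=> [u x] Op.
  have := oO _ Op; move=> /nbhs_ballP [e /= e0 he].
  have : 0 < e / 2 by rewrite divr_gt0.
  move=> /rat_in_itvoo [r]; rewrite in_itv /= => /andP[r0 re].
  have [q hq] := @rat_approx R u _ r0.
  have [y hy] := @rV_approx R d x _ r0.
  have sub : box (q, y, r) `<=` O.
    move=> [v z] [/= hv hz]; apply: he; split => /=.
      apply: (le_ball (e1 := ratr r + ratr r)); first lra.
      exact: ball_triangle hq hv.
    apply: (le_ball (e1 := ratr r + ratr r)); first lra.
    exact: ball_triangle hy hz.
  exists (q, y, r) => //; rewrite /F; case: asboolP => // _.
  by split => /=; apply: ball_sym.
apply: countable_bigcupT_measurable; first exact: countableP.
move=> t; rewrite /F; case: asboolP => _ //; apply: measurableX.
  by apply: open_measurable; exact: ball_open.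
by apply: sub_sigma_algebra; exact: ball_open.
Qed.

Lemma phi_meas (R : realType) (d : nat) :
  measurable_fun [set: R * Rd R d] (fun z : R * Rd R d => (z.1 *: z.2 : Rd R d)).
Proof.
apply: (@measurability _ _ _ (Rd R d) _ _ (@open 'rV[R]_d) erefl) => //.
move=> _ [U oU <-]; rewrite setTI.
apply: open_prod_meas.
have /continuousP := @scale_continuous R _ : continuous (fun z : R * 'rV[R]_d => z.1 *: z.2).
by apply.
Qed.
Lemma a2_meas (R : realType) (s : R) : measurable_fun [set: R] (fun r => a2 r s).
Proof.
rewrite /a2.
have E : (fun r : R => (0 < r) && (r < s)) @^-1` [set true] = `]0, s[%classic.
  by apply/seteqP; split => x /=; rewrite in_itv.
apply: measurable_fun_if => //.
- by apply: (measurable_fun_bool true); rewrite setTI E.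
rewrite setTI E; apply: open_continuous_measurable_fun; first exact: interval_open.
move=> x; rewrite inE /= in_itv /= => /andP[x0 xs].
apply: cvgM; first exact: cvg_cst.
apply: cvgV.
  by rewrite sqrtr_eq0 -ltNge subr_gt0 !expr2; nra.
apply: (@continuous_comp _ _ _ (fun r : R => s ^+ 2 - r ^+ 2) Num.sqrt x); last exact: sqrt_continuous.
apply: cvgB; first exact: cvg_cst.
exact: exprn_continuous.
Qed.

Definition sfmeasure (R : realType) (d : nat) (nu : {measure set (Rd R d) -> \bar R})
  (H : sigma_finite setT nu) : {sfinite_measure set (Rd R d) -> \bar R} :=
  let f : set (Rd R d) -> \bar R := Measure.sort nu in
  HB.pack_for (SFiniteMeasure.type (Rd R d) R) f (Measure.class nu) (isSFinite.Build _ _ _ f (sfinite_measure_sigma_finite H)).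

Lemma a1a2 (R : realType) (u : R) : a1 u 1 = a2 u 1.
Proof. by rewrite /a1 /a2 sqrtr1 expr1n. Qed.

Lemma a2_ge0 (R : realType) (r s : R) : 0 <= a2 r s.
Proof.
rewrite /a2; case: ifPn => // _; apply: mulr_ge0.
  by apply: divr_ge0 => //; exact: pi_ge0.
by rewrite invr_ge0 sqrtr_ge0.
Qed.

Lemma a2_scale (R : realType) (c u : R) : 0 < c -> a2 u 1 = c * a2 (c * u) c.
Proof.
move=> c0; rewrite /a2 pmulr_rgt0 // -[X in c * u < X]mulr1 ltr_pM2l //.
case: ifPn => [/andP[u0 u1]|_]; last by rewrite mulr0.
have -> : c ^+ 2 - (c * u) ^+ 2 = c ^+ 2 * (1 - u ^+ 2) by ring.
rewrite sqrtrM ?exprn_ge0 ?ltW // sqrtr_sqr.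
rewrite ger0_norm ?ltW // expr1n; field; apply/and3P; split.
- by rewrite gt_eqF // sqrtr_gt0 subr_gt0 expr2; nra.
- by rewrite gt_eqF.
- have := @pi_gt0 R; rewrite /pi pmulrn_lgt0 // => h; exact: (negbT (gt_eqF h)).
Qed.

Lemma dil_invE (R : realType) (d : nat) (u : R) (B : set (Rd R d)) : u != 0 ->
  dil_inv u B = (fun x : Rd R d => (u *: x : Rd R d)) @^-1` B.
Proof.
move=> u0; apply/seteqP; split => x /=.
  by move=> [y By <-]; rewrite scalerA mulfV // scale1r.
move=> Bx; exists (u *: x) => //; by rewrite scalerA mulVf // scale1r.
Qed.

Lemma meas0 (R : realType) (d : nat) : measurable ([set 0] : set (Rd R d)).
Proof.
have me := @cont_meas R d _ (@enorm_continuous R d).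
have -> : ([set 0] : set (Rd R d)) = (@enorm R d) @^-1` [set 0].
  apply/seteqP; split => x /=; first by move->; rewrite /enorm big1 ?sqrtr0 // => i _; rewrite mxE expr0n.
  exact: enorm_eq0.
by rewrite -[X in measurable X]setTI; apply: me => //; exact: measurable_set1.
Qed.

Theorem corollary2p14 (R : realType) (d : nat)
    (nu : {measure set (Rd R d) -> \bar R}) :
  levy_measure nu ->
  forall B : set (Rd R d), measurable B ->
    A2 nu B = Upsilon_dens (fun u => a1 u 1) nu B.
Proof.
move=> hL B mB.
have sf := @levy_sigma_finite R d nu hL.
pose nu' := @sfmeasure R d nu sf.
pose G := fun z : R * Rd R d => ((a2 z.1 1)%:E * (\1_B (z.1 *: z.2 : Rd R d))%:E)%E.
have mphi u : measurable_fun [set: Rd R d] (fun x : Rd R d => (u *: x : Rd R d)).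
  exact: (measurableT_comp (phi_meas R d) (measurable_fun_pair (measurable_cst (u : R)) (@measurable_id _ (Rd R d) setT))).
have mG : measurable_fun [set: R * Rd R d] G.
  apply: emeasurable_funM; apply/measurable_EFinP.
    exact: (measurableT_comp (@a2_meas R 1) measurable_fst).
  exact: (@measurableT_comp _ _ _ _ _ _ (\1_B : Rd R d -> R) setT (fun z : R * Rd R d => (z.1 *: z.2 : Rd R d)) (@measurable_indic _ _ R setT B mB) (phi_meas R d)).
have G0 z : (0 <= G z)%E by rewrite mule_ge0 // lee_fin ?a2_ge0 ?indic_ge0.
symmetry; rewrite /Upsilon_dens.
transitivity (\int[lebesgue_measure]_u \int[nu]_x G (u, x))%E.
  rewrite integral_mkcond; apply: eq_integral => u _.
  rewrite /patch; case: ifPn => hu.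
    have u0 : (0 < u)%R by move: hu; rewrite inE /= in_itv /= andbT.
    rewrite /G /= ge0_integralZl //; first last.
    - by rewrite lee_fin a2_ge0.
    - apply/measurable_EFinP; exact: (@measurableT_comp _ _ _ _ _ _ (\1_B : Rd R d -> R) setT (fun x : Rd R d => (u *: x : Rd R d)) (@measurable_indic _ _ R setT B mB) (mphi u)).
    rewrite muleC a1a2; congr (_ * _)%E.
    rewrite (@dil_invE R d u B (negbT (gt_eqF u0))).
    have mpre : measurable ((fun x : Rd R d => (u *: x : Rd R d)) @^-1` B).
      by have := mphi u measurableT B mB; rewrite setTI.
    rewrite -[X in nu X]setIT -integral_indic //.
  have a20 : a2 u 1 = 0.
    rewrite /a2; case: ifPn => // /andP[u0 _].
    by move/negP: hu; case; rewrite inE /= in_itv /= andbT.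
  rewrite /G /=; under eq_integral do rewrite a20 mul0e.
  by rewrite integral0.
transitivity (\int[nu']_x \int[lebesgue_measure]_u G (u, x))%E.
  exact: (sfinite_Fubini lebesgue_measure nu' G G0 mG).
pose H := fun x : Rd R d => (\int[lebesgue_measure]_u G (u, x))%E.
have mH : measurable_fun setT H.
  exact: (@measurable_fun_fubini_tonelli_G _ _ _ _ _ lebesgue_measure G mG G0).
have H0 x : (0 <= H x)%E by apply: integral_ge0 => u _.
have m0 := meas0 R d.
rewrite -(setvU [set (0 : Rd R d)]) ge0_integral_setU //; [|exact: measurableC|exact: measurable_funTS|by move=> x _; exact: H0|by apply/disj_setPS => x [/= ? ?]].
rewrite [X in (_ + X)%E]null_set_integral //; last 2 first.
- exact: measurable_funTS.
- by case: hL.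
rewrite adde0 /A2; apply: eq_integral => x.
rewrite inE /= => /eqP x0.
have c0 : (0 < enorm x)%R by exact: enorm_gt0.
set c := enorm x.
set y : Rd R d := (c^-1 *: x)%R.
pose f := fun r : R => ((a2 r c)%:E * (\1_B (r *: y : Rd R d))%:E)%E.
have mf : measurable_fun [set: R] f.
  apply: emeasurable_funM; apply/measurable_EFinP; first exact: a2_meas.
  exact: (@measurableT_comp _ _ _ _ _ _ (\1_B : Rd R d -> R) setT (fun r : R => (r *: y : Rd R d)) (@measurable_indic _ _ R setT B mB) (measurableT_comp (phi_meas R d) (measurable_fun_pair (@measurable_id _ R setT) (measurable_cst (y : Rd R d))))).
have f0 r : (0 <= f r)%E by rewrite mule_ge0 // lee_fin ?a2_ge0 ?indic_ge0.
transitivity (\int[lebesgue_measure]_r f r)%E; last first.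
  rewrite [RHS]integral_mkcond; apply: eq_integral => r _.
  rewrite /patch; case: ifPn => // hr.
  rewrite /f.
  have -> : a2 r c = 0%R.
    rewrite /a2; case: ifPn => // /andP[r0 _].
    by move/negP: hr; case; rewrite inE /= in_itv /= andbT ltW.
  by rewrite mul0e.
rewrite (@integral_scale R c c0 f mf f0).
rewrite -ge0_integralZl_EFin //; first last.
- exact: ltW.
- by apply: (measurableT_comp mf).
apply: eq_integral => u _.
rewrite /G /f /= (@a2_scale R c u c0) EFinM muleA; congr (_ * _)%E.
by rewrite /y scalerA mulrAC mulfV ?gt_eqF // mul1r.
Qed.
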